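(* Let $(z,x)$ be a feasible solution of the cluster LP on a finite vertex set $V$. For $u,v,w\in V$ define $y_{uv}=\sum_{S\supseteq\{u,v\}}z_S$ and $y_{uvw}=\sum_{S\supseteq\{u,v,w\}}z_S$. Then for any three distinct vertices $u,v,w$, $$3y_{uvw}\le y_{uv}+y_{uw}+y_{vw}\le\tfrac32+\tfrac32 y_{uvw}.$$
   Context: The cluster LP for a finite vertex set $V$ has a variable $z_S$ for every nonempty $S\subseteq V$ and $x_{uv}$ for every unordered pair $uv$ of distinct vertices, with constraints $\sum_{S\ni u}z_S=1$ for all $u\in V$, $\sum_{S\supseteq\{u,v\}}z_S=1-x_{uv}$ for all $uv$, and $z_S\ge0$. *)

(* Defs.v *)
From mathcomp Require Import all_boot all_order all_algebra.
Set Implicit Arguments. Unset Strict Implicit. Unset Printing Implicit Defensive.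
Import Order.TTheory GRing.Theory Num.Theory.
Local Open Scope ring_scope.

(* Cluster LP on a finite vertex set V: variables z_S for nonempty S ⊆ V
   (represented by z : {set V} -> R, the value at set0 being irrelevant)
   and x_{uv} for unordered pairs (represented by x : V -> V -> R, used
   only at u != v). *)
Definition cluster_LP_feasible (R : realFieldType) (V : finType)
    (z : {set V} -> R) (x : V -> V -> R) : Prop :=
  [/\ (forall u : V, \sum_(S : {set V} | (S != set0) && (u \in S)) z S = 1),
      (forall u v : V, u != v ->
         \sum_(S : {set V} | (S != set0) && ([set u; v] \subset S)) z S = 1 - x u v)
    & (forall S : {set V}, S != set0 -> 0 <= z S)].

Definition y2 (R : realFieldType) (V : finType) (z : {set V} -> R) (u v : V) : R :=
  \sum_(S : {set V} | [set u; v] \subset S) z S.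

Definition y3 (R : realFieldType) (V : finType) (z : {set V} -> R) (u v w : V) : R :=
  \sum_(S : {set V} | [set u; v; w] \subset S) z S.

(* Main.v *)
Require Import Defs.
From mathcomp Require Import all_boot all_order all_algebra.
From mathcomp Require Import ring lra.
Import Order.TTheory GRing.Theory Num.Theory.
Local Open Scope ring_scope.

Theorem lemma17 (R : realFieldType) (V : finType)
    (z : {set V} -> R) (x : V -> V -> R)
    (feas : cluster_LP_feasible z x) (u v w : V)
    (huv : u != v) (huw : u != w) (hvw : v != w) :
  3%:R * y3 z u v w <= y2 z u v + y2 z u w + y2 z v w /\
  y2 z u v + y2 z u w + y2 z v w <= 3%:R / 2%:R + 3%:R / 2%:R * y3 z u v w.
Proof.
case: feas => [H1 _ H0].
have E1 : forall p, \sum_S z S * (p \in S)%:R = 1.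
  move=> p; rewrite -[RHS](H1 p) [RHS]big_mkcond; apply: eq_bigr => S _.
  case Hp: (p \in S); rewrite ?andbT ?andbF /= ?mulr1 ?mulr0 //.
  by case: (S =P set0) => [E|//]; rewrite E in_set0 in Hp.
have E2 : forall p q, y2 z p q = \sum_S z S * ((p \in S) && (q \in S))%:R.
  move=> p q; rewrite /y2 big_mkcond; apply: eq_bigr => S _.
  by rewrite subUset !sub1set; case: (_ && _); rewrite ?mulr1 ?mulr0.
have E3 : y3 z u v w = \sum_S z S * [&& u \in S, v \in S & w \in S]%:R.
  rewrite /y3 big_mkcond; apply: eq_bigr => S _.
  by rewrite !subUset !sub1set -andbA; case: (_ && _); rewrite ?mulr1 ?mulr0.
have nz : forall S : {set V}, (u \in S) || (v \in S) || (w \in S) -> 0 <= z S.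
  move=> S HS; apply: H0; apply/set0Pn.
  by case/orP: HS => [/orP[]|] H; eexists; exact H.
rewrite !E2 E3.
set Su := \sum_S z S * (u \in S)%:R.
have -> : 3%:R / 2%:R + 3%:R / 2%:R * \sum_S z S * [&& u \in S, v \in S & w \in S]%:R
   = 1/2 * \sum_S z S * (u \in S)%:R + 1/2 * \sum_S z S * (v \in S)%:R
     + 1/2 * \sum_S z S * (w \in S)%:R
     + 3%:R / 2%:R * \sum_S z S * [&& u \in S, v \in S & w \in S]%:R.
  by rewrite !E1; field.
rewrite !mulr_sumr -!big_split /=.
split; apply: ler_sum => S _;
  case a: (u \in S); case b: (v \in S); case c: (w \in S) => /=;
  rewrite ?mulr0 ?mulr1 ?addr0 ?add0r ?mul0r ?mulr0 //;
  have := nz S; rewrite a b c /= => /(_ isT) hz; lra.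
Qed.
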